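(* Let $d^{AB}_n$ denote the number of signed derangements $\sigma\in B_n$ with $\ell_B(\sigma)$ even. Then: (i) for $n\ge 1$, $d^{AB}_n=n!\sum_{k=0}^{n-1}\frac{2^{n-k-1}(-1)^k}{k!}+(-1)^n$; (ii) for $n\ge 2$, $d^{AB}_n=2n\,d^{AB}_{n-1}+(-1)^n(n+1)$, with $d^{AB}_1=0$; (iii) for $n\ge 3$, $d^{AB}_n=(n-1)\big(2d^{AB}_{n-1}+4d^{AB}_{n-2}+(-1)^{n-1}\big)$, with $d^{AB}_1=0$, $d^{AB}_2=3$.
   Context: $B_n$ is the hyperoctahedral group: its elements are words $\sigma=\sigma_1\cdots\sigma_n$ with $\sigma_i\in\{\pm1,\dots,\pm n\}$ such that $|\sigma_1|\cdots|\sigma_n|$ is a permutation of $[n]$. A (signed) derangement is an element with $\sigma_i\ne i$ for all $i$. $\mathrm{inv}(\sigma)=\#\{(i,j):i<j,\ \sigma_i>\sigma_j\}$ with respect to the usual order of integers, and the length is $\ell_B(\sigma)=\mathrm{inv}(\sigma)-\sum_{i:\sigma_i<0}\sigma_i$. *)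

(* Defs.v *)
From mathcomp Require Import all_boot all_order fingroup perm all_algebra.
Set Implicit Arguments. Unset Strict Implicit. Unset Printing Implicit Defensive.
Import Order.TTheory GRing.Theory Num.Theory.
Local Open Scope ring_scope.

(* A signed permutation of [n] (an element of B_n) is encoded as a pair
   (p, e) with p a permutation of 'I_n (0-indexed) and e a sign vector;
   e i = true means the i-th letter is negative.  The i-th letter
   (1-indexed position i+1) is  sigma_{i+1} = +/- (p i + 1). *)
Definition signed_perm (n : nat) : finType :=
  ({perm 'I_n} * {ffun 'I_n -> bool})%type.

Definition sletter n (s : signed_perm n) (i : 'I_n) : int :=
  if s.2 i then - (Posz (s.1 i).+1) else Posz (s.1 i).+1.

Definition sderangement n (s : signed_perm n) : bool :=
  [forall i : 'I_n, sletter s i != Posz i.+1].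

Definition inv_B n (s : signed_perm n) : nat :=
  #|[set ij : 'I_n * 'I_n | (ij.1 < ij.2)%N && (sletter s ij.2 < sletter s ij.1)]|.

Definition lengthB n (s : signed_perm n) : int :=
  Posz (inv_B s) - \sum_(i : 'I_n | sletter s i < 0) sletter s i.

Definition dAB (n : nat) : nat :=
  #|[set s : signed_perm n | sderangement s && (2 %| `|lengthB s|)%N]|.

(* Main.v *)
Require Import Defs.
From mathcomp Require Import all_boot all_order fingroup perm all_algebra.
From mathcomp Require Import zify ring.
Import Order.TTheory GRing.Theory Num.Theory.
Set Implicit Arguments. Unset Strict Implicit. Unset Printing Implicit Defensive.
Local Open Scope ring_scope.

Lemma sum_ltn_ord (N m : nat) : \sum_(k < N) ((k < m)%N : nat) = minn m N.
Proof.
elim: N => [|N IH]; first by rewrite big_ord0; lia.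
rewrite big_ord_recr /= IH; case: ltnP => h; lia.
Qed.

Lemma perm_rank n (p : {perm 'I_n}) i : \sum_j ((p j < p i)%N : nat) = p i.
Proof.
rewrite (reindex_inj (@perm_inj _ p^-1)) /=.
under eq_bigr => j _ do rewrite permKV.
rewrite sum_ltn_ord; have := ltn_ord (p i); lia.
Qed.

Lemma odd_sum_eq (I : finType) (F G : I -> nat) :
  (forall i, odd (F i) = odd (G i)) -> odd (\sum_i F i) = odd (\sum_i G i).
Proof.
move=> h; apply: (big_ind2 (fun a b => odd a = odd b)) => //.
by move=> a b c d e f; rewrite !oddD e f.
Qed.

Lemma pair_split (I : finType) (X : I -> I -> nat) (ord : I -> nat) :
  injective ord ->
  (\sum_(ij : I * I) X ij.1 ij.2 =
  \sum_(ij : I * I) (((ord ij.1 < ord ij.2)%N : nat) * (X ij.1 ij.2 + X ij.2 ij.1))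
  + \sum_i X i i)%N.
Proof.
move=> oi.
have e1 : forall ij : I * I, X ij.1 ij.2 =
   (((ord ij.1 < ord ij.2)%N : nat) * X ij.1 ij.2 + ((ord ij.2 < ord ij.1)%N : nat) * X ij.1 ij.2
    + ((ij.1 == ij.2) : nat) * X ij.1 ij.2)%N.
  move=> [i j] /=; case: (ltngtP (ord i) (ord j)) => h.
  - have : i != j by apply/eqP => e; move: h; rewrite e ltnn.
    by move/negbTE => ->; lia.
  - have : i != j by apply/eqP => e; move: h; rewrite e ltnn.
    by move/negbTE => ->; lia.
  - by rewrite (oi _ _ h) eqxx; lia.
rewrite (eq_bigr _ (fun ij _ => e1 ij)) !big_split /=.
congr (_ + _).
  under [RHS]eq_bigr => ij _ do rewrite mulnDr.
  rewrite big_split /=; congr (_ + _).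
  by rewrite (reindex_inj (can_inj (@swap_pairK I I))) /=.

rewrite -(pair_bigA _ (fun i j => (((i == j) : nat) * X i j)%N)) /=; apply: eq_bigr => i _.
rewrite (bigD1 i) //= eqxx mul1n big1; first by rewrite addn0.
by move=> j; rewrite eq_sym => /negbTE ->.
Qed.
Lemma core (a b : nat) (ei ej : bool) : a != b ->
  odd ((((if ej then - Posz b.+1 else Posz b.+1) < (if ei then - Posz a.+1 else Posz a.+1))%R : nat)
       + (ei && (b < a)%N) + (ej && (a < b)%N))%N = odd (b < a)%N.
Proof.
move=> nab; case: ei; case: ej; case: (ltngtP a b) => h //=; try by move: nab; rewrite h eqxx.
all: first [ have -> : (- Posz b.+1 < - Posz a.+1) = true by lia
           | have -> : (- Posz b.+1 < - Posz a.+1) = false by lia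
           | have -> : (Posz b.+1 < - Posz a.+1) = false by lia
           | have -> : (- Posz b.+1 < Posz a.+1) = true by lia
           | have -> : (Posz b.+1 < Posz a.+1) = true by lia
           | have -> : (Posz b.+1 < Posz a.+1) = false by lia
           | idtac ].
all: rewrite /= ?addn0 ?add0n //.
Qed.

Lemma sletter_neg n (s : signed_perm n) i : (sletter s i < 0) = s.2 i.
Proof. by rewrite /sletter; case: (s.2 i) => /=; lia. Qed.

Lemma lengthB_eq n (s : signed_perm n) : lengthB s = Posz (inv_B s + \sum_(i | s.2 i) (s.1 i).+1)%N.
Proof.
rewrite /lengthB PoszD (big_morph Posz PoszD (erefl _)).
rewrite -sumrN; congr (_ + _); rewrite (eq_bigl (fun i => s.2 i)); last by move=> i; rewrite sletter_neg.
by apply: eq_bigr => i ei; rewrite /sletter ei opprK.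
Qed.

Lemma card_setE (T : finType) (P : pred T) : #|[set x | P x]| = (\sum_x (P x : nat))%N.
Proof. by rewrite -sum1_card big_mkcond /=; apply: eq_bigr => x _; rewrite inE; case: (P x). Qed.

Definition invp n (p : {perm 'I_n}) : nat :=
  (\sum_(ij : 'I_n * 'I_n) ((ij.1 < ij.2)%N && (p ij.2 < p ij.1)%N : nat))%N.
Definition nneg n (s : signed_perm n) : nat := (\sum_i (s.2 i : nat))%N.

Lemma parity n (s : signed_perm n) : odd `|lengthB s| = odd (invp s.1 + nneg s).
Proof.
rewrite lengthB_eq /= /inv_B card_setE.
have -> : (\sum_(i | s.2 i) (s.1 i).+1 = nneg s + \sum_(ij : 'I_n * 'I_n) (s.2 ij.1 && (s.1 ij.2 < s.1 ij.1)%N : nat))%N.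
  rewrite big_mkcond /= -(pair_bigA _ (fun i j => (s.2 i && (s.1 j < s.1 i)%N : nat))) /=.
  rewrite /nneg -big_split /=; apply: eq_bigr => i _.
  case: (s.2 i) => /=; last by rewrite big1.
  by rewrite add1n (perm_rank s.1 i).
rewrite addnCA [in RHS]addnC !oddD; congr (_ (+) _).
rewrite -oddD -big_split /=.
set X := fun i j : 'I_n => (((i < j)%N && (sletter s j < sletter s i)%R : nat) + (s.2 i && (s.1 j < s.1 i)%N : nat))%N.
set Y := fun i j : 'I_n => ((i < j)%N && (s.1 j < s.1 i)%N : nat).
rewrite /invp.
rewrite (pair_split X (@ord_inj n)) (pair_split Y (@ord_inj n)).
have hX : (\sum_i X i i = 0)%N.
  by apply: big1 => i _; rewrite /X !ltnn andbF.
have hY : (\sum_i Y i i = 0)%N by apply: big1 => i _; rewrite /Y !ltnn.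
rewrite hX hY.
rewrite !addn0; apply: odd_sum_eq => -[i j] /=.
case: (ltnP i j) => hij; last by rewrite !mul0n.
rewrite !mul1n /X /Y hij.
have -> : (j < i)%N = false by rewrite ltnNge (ltnW hij).
rewrite /= ?addn0 ?add0n.
have nij : (s.1 i : nat) != s.1 j by rewrite (inj_eq val_inj) (inj_eq perm_inj); apply/eqP => e; move: hij; rewrite e ltnn.
by rewrite /sletter (core (s.2 i) (s.2 j) nij).
Qed.

Section Count.
Variable R : comNzRingType.
Variable n : nat.

Lemma prod_boolR (I : finType) (A : pred I) (P : pred I) :
  \prod_(i | A i) ((P i : nat)%:R : R) = (([forall (i | A i), P i] : nat)%:R : R).
Proof.
case: (boolP [forall (i | A i), P i]) => [/forallP H|/forallPn [i]].
  by rewrite big1 // => i Ai; move: (H i); rewrite Ai /= => ->.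
rewrite negb_imply => /andP [Ai nPi].
by rewrite (bigD1 i) //= (negbTE nPi) mul0r.
Qed.

Lemma sletter_ne (p : {perm 'I_n}) (e : {ffun 'I_n -> bool}) i :
  (sletter ((p, e) : signed_perm n) i != Posz i.+1) = e i || (p i != i).
Proof.
rewrite /sletter /=; case: (e i) => /=; first by lia.
by rewrite eqz_nat eqSS.
Qed.

Lemma der_prod (p : {perm 'I_n}) (e : {ffun 'I_n -> bool}) :
  ((sderangement ((p, e) : signed_perm n) : nat)%:R : R)
  = \prod_i (((e i || (p i != i)) : nat)%:R).
Proof.
rewrite (prod_boolR xpredT (fun i => e i || (p i != i))) /sderangement.
congr ((nat_of_bool _)%:R); apply: eq_forallb => i; by rewrite sletter_ne.
Qed.

Lemma sum_ffun_bool (F : 'I_n -> bool -> R) :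
  \sum_(e : {ffun 'I_n -> bool}) \prod_i F i (e i) = \prod_i (F i true + F i false).
Proof. by rewrite -bigA_distr_bigA; apply: eq_bigr => i _; rewrite big_bool. Qed.

Lemma sum_signed (F : signed_perm n -> R) :
  \sum_(s : signed_perm n) F s = \sum_(p : {perm 'I_n}) \sum_(e : {ffun 'I_n -> bool}) F (p, e).
Proof. by rewrite pair_bigA; apply: eq_bigr => -[p e]. Qed.

Lemma twice_dAB :
  2 * ((dAB n)%:R : R) = \sum_(p : {perm 'I_n}) \prod_i (1 + ((p i != i) : nat)%:R)
     + \sum_(p : {perm 'I_n}) (-1) ^+ invp p * \prod_i (-1 + ((p i != i) : nat)%:R).
Proof.
rewrite /dAB card_setE natr_sum mulr_sumr.
have step : forall s : signed_perm n,
   2 * ((sderangement s && (2 %| `|lengthB s|)%N : nat)%:R : R) =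
   (sderangement s : nat)%:R + (sderangement s : nat)%:R * (-1) ^+ (invp s.1 + nneg s).
  move=> s; rewrite -signr_odd -parity signr_odd dvdn2.
  case: (sderangement s); last by rewrite /= mulr0 mul0r addr0.
  rewrite /= mul1r -signr_odd; case: (odd _) => /=.
    by rewrite expr1 subrr mulr0.
  by rewrite expr0 mulr1.
rewrite (eq_bigr _ (fun s _ => step s)) big_split /= !sum_signed.
congr (_ + _); apply: eq_bigr => p _.
  rewrite (eq_bigr _ (fun e _ => der_prod p e)) (sum_ffun_bool (fun i b => (((b || (p i != i)) : nat)%:R : R))).
  by apply: eq_bigr => i _.
rewrite (eq_bigr (fun e : {ffun 'I_n -> bool} => (-1) ^+ invp p * \prod_i ((((e i || (p i != i)) : nat)%:R : R) * (-1) ^+ (e i)))); last first.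
  move=> e _; rewrite (der_prod p e) exprD /nneg /=.
  rewrite (big_morph (fun k => (-1) ^+ k : R) (fun a b => exprD _ a b) (expr0 _)).
  by rewrite mulrCA -big_split.
rewrite -mulr_sumr (sum_ffun_bool (fun i b => (((b || (p i != i)) : nat)%:R : R) * (-1) ^+ b)).
congr (_ * _); apply: eq_bigr => i _.
by rewrite /= expr1 expr0 mulr1 mulrN1.
Qed.

Lemma sumB : \sum_(p : {perm 'I_n}) (-1) ^+ invp p * \prod_i (-1 + ((p i != i) : nat)%:R) = (-1) ^+ n :> R.
Proof.
rewrite (bigD1 1%g) //= [X in _ + X]big1 ?addr0.
  have -> : invp (1%g : {perm 'I_n}) = 0%N.
    by apply: big1 => -[i j] _; rewrite !perm1 /=; case: ltngtP.
  rewrite expr0 mul1r (eq_bigr (fun _ => -1)); last by move=> i _; rewrite perm1 eqxx addr0.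
  by rewrite prodr_const card_ord.
move=> p np1; case: (pickP (fun i => p i != i)) => [i Hi|H].
  by rewrite (bigD1 i) //= Hi addrC subrr mul0r mulr0.
case/eqP: np1; apply/permP => i; rewrite perm1; move: (H i) => /= /negbFE /eqP //.
Qed.

Lemma prod_J (p : {perm 'I_n}) :
  \prod_i (1 + ((p i != i) : nat)%:R) =
  \sum_(J : {set 'I_n}) (-1) ^+ #|J| * 2 ^+ (n - #|J|)%N * (([forall (i | i \in J), p i == i] : nat)%:R : R).
Proof.
rewrite (eq_bigr (fun i => - (((p i == i) : nat)%:R) + 2)); last first.
  by move=> i _; case: (p i == i) => /=; ring.
rewrite (@bigA_distr R 0 1 *%R +%R _ (fun i => - (((p i == i) : nat)%:R : R)) (fun _ => 2)); apply: eq_bigr => J _.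
rewrite big_if /= prodrN (prod_boolR (fun i => i \in J) (fun i => p i == i)) prodr_const.
have -> : #|(fun i : 'I_n => i \notin J)| = (n - #|J|)%N.
  have h := cardC J; rewrite card_ord in h.
  apply: (@addnI #|J|); rewrite subnKC; last by move: (max_card (mem J)); rewrite card_ord.
  by rewrite -[in RHS]h; congr (_ + _); apply: eq_card.
ring.
Qed.
Lemma sum_by_card (f : nat -> R) :
  \sum_(J : {set 'I_n}) f #|J| = \sum_(k < n.+1) ('C(n, k))%:R * f k.
Proof.
rewrite (partition_big (fun J : {set 'I_n} => (inord #|J| : 'I_n.+1)) xpredT) //=.
apply: eq_bigr => k _.
rewrite (eq_bigl (fun J : {set 'I_n} => #|J| == k)); last first.
  move=> J /=; rewrite -val_eqE /= inordK // ltnS.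
  by move: (max_card (mem J)); rewrite card_ord.
rewrite (eq_bigr (fun _ => f k)); last by move=> J /eqP ->.
rewrite sumr_const  mulr_natl; congr (_ *+ _).
have := card_draws 'I_n k; rewrite card_ord => <-.
by rewrite cardsE.
Qed.

Lemma cnt_fix (J : {set 'I_n}) :
  (\sum_(p : {perm 'I_n}) ([forall (i | i \in J), p i == i] : nat))%N = (n - #|J|)`!.
Proof.
have -> : (n - #|J|)%N = #|~: J| by have h := cardsC J; rewrite card_ord in h; lia.
rewrite -card_perm -sum1_card [RHS]big_mkcond /=; apply: eq_bigr => p _.
suff -> : [forall (i | i \in J), p i == i] = perm_on (~: J) p by [].
apply/idP/idP.
  move/forallP => H; apply/subsetP => x; rewrite !inE; apply: contra => xJ.
  exact: (implyP (H x) xJ).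
move/subsetP => H; apply/forallP => x; apply/implyP => xJ.
apply: contraTT xJ => px.
by have := H x; rewrite !inE => ->.
Qed.

Lemma sumA : \sum_(p : {perm 'I_n}) \prod_i (1 + ((p i != i) : nat)%:R) =
  \sum_(k < n.+1) (('C(n, k) * (n - k)`! * 2 ^ (n - k))%N%:R * (-1) ^+ k) :> R.
Proof.
rewrite (eq_bigr _ (fun p _ => prod_J p)) exchange_big /=.
under eq_bigr => J _ do rewrite -mulr_sumr -natr_sum cnt_fix.
rewrite (sum_by_card (fun k => (-1) ^+ k * 2 ^+ (n - k) * ((n - k)`!)%:R)).
apply: eq_bigr => k _; rewrite !natrM natrX; ring.
Qed.
End Count.

Definition tt (R : comNzRingType) n : R :=
  \sum_(k < n.+1) (('C(n, k) * (n - k)`! * 2 ^ (n - k))%N%:R * (-1) ^+ k).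

Lemma key (R : comNzRingType) n : 2 * ((dAB n)%:R : R) = tt R n + (-1) ^+ n.
Proof. by rewrite twice_dAB sumA sumB. Qed.

Lemma binfS n k : (k <= n)%N ->
  ('C(n.+1, k) * (n.+1 - k)`! * 2 ^ (n.+1 - k) = 2 * n.+1 * ('C(n, k) * (n - k)`! * 2 ^ (n - k)))%N.
Proof.
move=> kn; rewrite subSn // expnS.
have h : ('C(n.+1, k) * (n.+1 - k)`! = n.+1 * ('C(n, k) * (n - k)`!))%N.
  apply/eqP; rewrite -(eqn_pmul2l (fact_gt0 k)); apply/eqP.
  transitivity ('C(n.+1, k) * (k`! * (n.+1 - k)`!))%N; first ring.
  rewrite bin_fact ?(leqW kn) // factS -(bin_fact kn); ring.
rewrite -subSn // mulnA h; lia.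
Qed.

Lemma ttS (R : comNzRingType) n : tt R n.+1 = 2 * (n.+1)%:R * tt R n + (-1) ^+ n.+1.
Proof.
rewrite /tt big_ord_recr /= binn subnn fact0 expn0 !muln1 mul1r; congr (_ + _).
rewrite mulr_sumr; apply: eq_bigr => k _.
rewrite binfS; last by rewrite -ltnS.
by rewrite !natrM; ring.
Qed.

Theorem theorem1p2 :
  (forall n : nat, (1 <= n)%N ->
     (dAB n)%:Q =
       (n`!)%:Q * (\sum_(k < n) (2 ^ (n - k - 1))%N%:Q * (-1) ^+ k / (k`!)%:Q)
       + (-1) ^+ n)
  /\
  ((forall n : nat, (2 <= n)%N ->
     (dAB n)%:Z = 2 * n%:Z * (dAB n.-1)%:Z + (-1) ^+ n * (n.+1)%:Z)
   /\ dAB 1 = 0%N)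
  /\
  ((forall n : nat, (3 <= n)%N ->
     (dAB n)%:Z = (n.-1)%:Z * (2 * (dAB n.-1)%:Z + 4 * (dAB n.-2)%:Z + (-1) ^+ n.-1))
   /\ dAB 1 = 0%N /\ dAB 2 = 3%N).
Proof.
have rec2 : forall m : nat,
    (dAB m.+1)%:Z = 2 * (m.+1)%:Z * (dAB m)%:Z + (-1) ^+ m.+1 * (m.+2)%:Z.
  move=> m; apply: (@mulfI _ 2) => //.
  have k1 := key int m.+1; have k0 := key int m; rewrite ttS in k1.
  rewrite !natz in k1 k0.
  rewrite k1 exprS.
  set s := (-1) ^+ m : int; set T := tt int m.
  set X := (dAB m)%:Z in k0 *.
  have -> : T = 2 * X - s by rewrite k0 addrK.
  ring.
have d1 : dAB 1 = 0%N.
  have := key int 1; rewrite /tt !big_ord_recr big_ord0 /= natz.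
  move=> h; rewrite ?expr0 ?expr1 /= in h; lia.
have d2 : dAB 2 = 3%N.
  have := key int 2; rewrite /tt !big_ord_recr big_ord0 /= natz.
  move=> h.
  rewrite -[('C(2, 0) * (2 - 0)`! * 2 ^ (2 - 0))%N]/8%N -[('C(2, 1) * (2 - 1)`! * 2 ^ (2 - 1))%N]/4%N in h.
  rewrite -[('C(2, 2) * (2 - 2)`! * 2 ^ (2 - 2))%N]/1%N -signr_odd /= expr0 !natz in h.
  lia.
split.
  move=> n _; have k := key rat n; rewrite -!pmulrn.
  under eq_bigr => k' _ do rewrite -!pmulrn.
  rewrite /tt big_ord_recr /= binn subnn fact0 expn0 !muln1 mul1r in k.
  apply: (@mulfI _ 2) => //; rewrite k mulrDr -addrA; congr (_ + _); last by ring.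
  rewrite mulr_sumr mulr_sumr; apply: eq_bigr => k' _ /=.
  have kn : (k' < n)%N := ltn_ord k'.
  have hb := bin_fact (ltnW kn).
  have he : (2 ^ (n - k') = 2 * 2 ^ (n - k' - 1))%N.
    by rewrite -expnS; f_equal; lia.

  rewrite he -hb !natrM.
  have kf : (k'`!)%:R != 0 :> rat by rewrite pnatr_eq0 -lt0n fact_gt0.
  field; exact: kf.
split; first split => //.
  by move=> n; case: n => [|[|m]] // _; exact: rec2 m.+1.
split; last by split.
move=> n; case: n => [|[|[|m]]] // _ /=.
rewrite (rec2 m.+2) (rec2 m.+1) !exprS.
lia.
Qed.
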